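(* Let $S$ be an infinite supernatural number, $\lambda$ a non-archimedean length function on $\widetilde{\mathbb Z_S}$ that grows fast enough, and $\varphi:\mathbb Z_S\to\mathbb Z_S$, $\varphi(x)=x+1$. For $f\in C_{RD}(\mathbb Z_S)$ we have $\int_{\mathbb Z_S}f\,dx=0$ if and only if there exists $g\in C_{RD}(\mathbb Z_S)$ with $f=g\circ\varphi-g$.
   Context: Odometer $\mathbb Z_S=\varprojlim\mathbb Z/s_m\mathbb Z$ for a scale $(s_m)_{m\ge1}$ (positive integers, $s_m\mid s_{m+1}$, $s_m<s_{m+1}$) with $S=\mathrm{lcm}(s_m)$ infinite; $1=(1,1,\dots)$ generates a dense cyclic subgroup; $dx$ is normalized Haar measure. $\widetilde{\mathbb Z_S}=\{z\in\mathbb C:z^s=1\text{ for some } s\mid S\}$; $\chi_z$ is the character with $\chi_z(1)=z$; $\hat f_z=\int f\chi_{\bar z}\,dx$. A non-archimedean length function is $\lambda:\widetilde{\mathbb Z_S}\to[1,\infty)$ with (i) $\lambda(z)=1$ iff $z=1$; (ii) $\lambda(z_1z_2)\le\max\{\lambda(z_1),\lambda(z_2)\}$; (iii) $\{z:\lambda(z)\le r\}$ finite for all $r\ge1$; it grows fast enough if $\lambda(z)\ge c\,(\mathrm{ord}(z))^\alpha$ for some $\alpha,c>0$ and all $z$. $\|f\|_N=\sum_z|\hat f_z|\lambda(z)^N$ and $C_{RD}(\mathbb Z_S)=\{f\in C(\mathbb Z_S):\|f\|_N<\infty\ \forall N\ge 0\}$. *)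

(* Defs.v *)
From Stdlib Require Import Reals Lra Lia Arith PeanoNat List ClassicalEpsilon.
From Coquelicot Require Import Coquelicot.
Open Scope R_scope.

(** A scale (s_m)_m : positive integers, s_m | s_{m+1}, s_m < s_{m+1}
    (indexed from 0 instead of 1).  S = lcm(s_m) is then automatically an
    infinite supernatural number. *)
Record scale := Scale {
  sc : nat -> nat;
  sc_pos : forall m, (0 < sc m)%nat;
  sc_dvd : forall m, Nat.divide (sc m) (sc (S m));
  sc_lt  : forall m, (sc m < sc (S m))%nat
}.

(** The odometer Z_S = inverse limit of Z/s_m Z, elements are compatible
    sequences of residues. *)
Record ZS (s : scale) := MkZS {
  zs : nat -> nat;
  zs_lt : forall m, (zs m < sc s m)%nat;
  zs_coh : forall m, zs m = Nat.modulo (zs (S m)) (sc s m)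
}.
Arguments zs {s} _ _.
Arguments MkZS {s} _ _ _.

Lemma mod_mod_dvd (a b c : nat) : Nat.divide c b ->
  Nat.modulo (Nat.modulo a b) c = Nat.modulo a c.
Proof.
  intros [k ->].
  rewrite (Nat.div_mod_eq a (k * c)) at 2.
  replace (k * c * (a / (k * c)))%nat with ((k * (a / (k * c))) * c)%nat by ring.
  rewrite Nat.add_comm, Nat.Div0.mod_add. reflexivity.
Qed.

Lemma zadd_lt (s : scale) (x y : ZS s) m :
  (Nat.modulo (zs x m + zs y m) (sc s m) < sc s m)%nat.
Proof. apply Nat.mod_upper_bound. pose proof (sc_pos s m); lia. Qed.

Lemma zadd_coh (s : scale) (x y : ZS s) m :
  Nat.modulo (zs x m + zs y m) (sc s m) =
  Nat.modulo (Nat.modulo (zs x (S m) + zs y (S m)) (sc s (S m))) (sc s m).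
Proof.
  pose proof (sc_pos s m) as H0. pose proof (sc_pos s (S m)) as H1.
  rewrite (mod_mod_dvd _ _ _ (sc_dvd s m)).
  rewrite (zs_coh s x m), (zs_coh s y m).
  rewrite <- Nat.Div0.add_mod. reflexivity.
Qed.

Definition zadd (s : scale) (x y : ZS s) : ZS s :=
  MkZS (fun m => Nat.modulo (zs x m + zs y m) (sc s m))
       (zadd_lt s x y) (zadd_coh s x y).

Lemma zone_lt (s : scale) m : (Nat.modulo 1 (sc s m) < sc s m)%nat.
Proof. apply Nat.mod_upper_bound. pose proof (sc_pos s m); lia. Qed.

Lemma zone_coh (s : scale) m :
  Nat.modulo 1 (sc s m) = Nat.modulo (Nat.modulo 1 (sc s (S m))) (sc s m).
Proof.
  pose proof (sc_pos s m). pose proof (sc_pos s (S m)).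
  rewrite (mod_mod_dvd _ _ _ (sc_dvd s m)). reflexivity.
Qed.

Definition zone (s : scale) : ZS s :=
  MkZS (fun m => Nat.modulo 1 (sc s m)) (zone_lt s) (zone_coh s).

Definition phi (s : scale) (x : ZS s) : ZS s := zadd s x (zone s).

(** Continuity of f : Z_S -> C for the inverse-limit topology (basic
    neighbourhoods of x are the cylinders {y | y_m = x_m}). *)
Definition Zcont (s : scale) (f : ZS s -> C) : Prop :=
  forall (x : ZS s) (eps : R), 0 < eps ->
    exists m : nat, forall y : ZS s, zs y m = zs x m ->
      Cmod (Cminus (f y) (f x)) < eps.

Definition is_haar_integral (s : scale) (I : (ZS s -> C) -> C) : Prop :=
  (forall (a : C) (f g : ZS s -> C), Zcont s f -> Zcont s g ->
      I (fun x => Cplus (Cmult a (f x)) (g x)) = Cplus (Cmult a (I f)) (I g)) /\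
  (forall f : ZS s -> C, Zcont s f ->
      (forall x, Im (f x) = 0 /\ 0 <= Re (f x)) ->
      Im (I f) = 0 /\ 0 <= Re (I f)) /\
  I (fun _ => RtoC 1) = RtoC 1 /\
  (forall (a : ZS s) (f : ZS s -> C), Zcont s f ->
      I (fun x => f (zadd s x a)) = I f).

(** The dual group tilde(Z_S) = { z in C | z^s = 1 for some s | S }
    = { z | z^(s_m) = 1 for some m }. *)
Definition in_dual (s : scale) (z : C) : Prop :=
  exists m : nat, Cpow z (sc s m) = RtoC 1.

Definition level (s : scale) (z : C) : nat :=
  epsilon (inhabits 0%nat) (fun m => Cpow z (sc s m) = RtoC 1).

(** The character chi_z (chi_z(1) = z): chi_z(x) = z^(x_m) for any m with
    z^(s_m) = 1. *)
Definition chi (s : scale) (z : C) (x : ZS s) : C :=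
  Cpow z (zs x (level s z)).

Definition fourier (s : scale) (I : (ZS s -> C) -> C) (f : ZS s -> C) (z : C) : C :=
  I (fun x => Cmult (f x) (chi s (Cconj z) x)).

Definition is_order (z : C) (n : nat) : Prop :=
  (0 < n)%nat /\ Cpow z n = RtoC 1 /\
  forall k : nat, (0 < k)%nat -> (k < n)%nat -> Cpow z k <> RtoC 1.

(** Non-archimedean length function on tilde(Z_S) (only its values on
    tilde(Z_S) matter). *)
Definition is_na_length (s : scale) (lam : C -> R) : Prop :=
  (forall z, in_dual s z -> 1 <= lam z) /\
  (forall z, in_dual s z -> (lam z = 1 <-> z = RtoC 1)) /\
  (forall z1 z2, in_dual s z1 -> in_dual s z2 ->
      lam (Cmult z1 z2) <= Rmax (lam z1) (lam z2)) /\
  (forall r : R, 1 <= r -> exists l : list C,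
      forall z, in_dual s z -> lam z <= r -> In z l).

Definition grows_fast (s : scale) (lam : C -> R) : Prop :=
  exists alpha c : R, 0 < alpha /\ 0 < c /\
    forall (z : C) (n : nat), in_dual s z -> is_order z n ->
      c * Rpower (INR n) alpha <= lam z.

(** Sum over tilde(Z_S) of a nonnegative function is finite: the sums over
    finite subsets are bounded. *)
Definition dual_summable (s : scale) (a : C -> R) : Prop :=
  exists B : R, forall l : list C, NoDup l -> (forall z, In z l -> in_dual s z) ->
    fold_right Rplus 0 (map a l) <= B.

Definition C_RD (s : scale) (I : (ZS s -> C) -> C) (lam : C -> R) (f : ZS s -> C) : Prop :=
  Zcont s f /\
  forall N : nat, dual_summable s (fun z => Cmod (fourier s I f z) * (lam z ^ N)).

(* Main.v *)
Require Import Defs.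
From Stdlib Require Import Reals.
From Coquelicot Require Import Coquelicot.
From Stdlib Require Import Lra Lia Arith ZArith Wf_nat List Permutation ClassicalEpsilon FunctionalExtensionality Classical.

Definition csum {A} (l : list A) (F : A -> C) : C := fold_right Cplus (RtoC 0) (map F l).
Definition rsum {A} (l : list A) (F : A -> R) : R := fold_right Rplus 0 (map F l).

Lemma csum_nil {A} (F : A -> C) : csum nil F = RtoC 0.
Proof. reflexivity. Qed.
Lemma csum_cons {A} (a : A) l F : csum (a :: l) F = Cplus (F a) (csum l F).
Proof. reflexivity. Qed.
Lemma rsum_cons {A} (a : A) l F : rsum (a :: l) F = F a + rsum l F.
Proof. reflexivity. Qed.

Lemma csum_app {A} (l1 l2 : list A) F : csum (l1 ++ l2) F = Cplus (csum l1 F) (csum l2 F).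
Proof. induction l1; simpl. unfold csum; simpl. ring. rewrite !csum_cons, IHl1. ring. Qed.
Lemma rsum_app {A} (l1 l2 : list A) F : rsum (l1 ++ l2) F = rsum l1 F + rsum l2 F.
Proof. induction l1; simpl. unfold rsum; simpl. ring. rewrite !rsum_cons, IHl1. ring. Qed.

Lemma csum_ext {A} (l : list A) F G : (forall x, In x l -> F x = G x) -> csum l F = csum l G.
Proof. induction l; intros H; simpl. reflexivity. rewrite !csum_cons, H, IHl; auto.
  intros; apply H; simpl; auto. simpl; auto. Qed.
Lemma rsum_le {A} (l : list A) F G : (forall x, In x l -> F x <= G x) -> rsum l F <= rsum l G.
Proof. induction l; intros H; simpl. unfold rsum; simpl; lra. rewrite !rsum_cons.
  apply Rplus_le_compat. apply H; simpl; auto. apply IHl; intros; apply H; simpl; auto. Qed.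
Lemma rsum_nonneg {A} (l : list A) F : (forall x, In x l -> 0 <= F x) -> 0 <= rsum l F.
Proof. induction l; intros H. unfold rsum; simpl; lra. rewrite rsum_cons.
  apply Rplus_le_le_0_compat. apply H; simpl; auto. apply IHl; intros; apply H; simpl; auto. Qed.
Lemma rsum_scal {A} (l : list A) F a : rsum l (fun x => a * F x) = a * rsum l F.
Proof. induction l. unfold rsum; simpl; ring. rewrite !rsum_cons, IHl; ring. Qed.

Lemma csum_plus {A} (l : list A) F G : csum l (fun x => Cplus (F x) (G x)) = Cplus (csum l F) (csum l G).
Proof. induction l. unfold csum; simpl; ring. rewrite !csum_cons, IHl; ring. Qed.
Lemma csum_scal {A} (l : list A) F a : csum l (fun x => Cmult a (F x)) = Cmult a (csum l F).
Proof. induction l. unfold csum; simpl; ring. rewrite !csum_cons, IHl; ring. Qed.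
Lemma csum_zero {A} (l : list A) F : (forall x, In x l -> F x = RtoC 0) -> csum l F = RtoC 0.
Proof. intros H. rewrite (csum_ext l F (fun _ => RtoC 0)) by auto. clear H.
  induction l. reflexivity. rewrite csum_cons, IHl. ring. Qed.
Lemma csum_const {A} (l : list A) a : csum l (fun _ => a) = Cmult (RtoC (INR (length l))) a.
Proof. induction l. unfold csum; simpl. ring. rewrite csum_cons, IHl. simpl length.
  rewrite S_INR. rewrite RtoC_plus. ring. Qed.
Lemma csum_perm {A} (l l' : list A) F : Permutation l l' -> csum l F = csum l' F.
Proof. induction 1. reflexivity. rewrite !csum_cons, IHPermutation; auto.
  rewrite !csum_cons; ring. congruence. Qed.
Lemma csum_swap {A B} (l1 : list A) (l2 : list B) F :
  csum l1 (fun a => csum l2 (fun b => F a b)) = csum l2 (fun b => csum l1 (fun a => F a b)).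
Proof. induction l1. simpl. symmetry. apply csum_zero. intros; reflexivity.
  rewrite csum_cons, IHl1. rewrite <- csum_plus. apply csum_ext. intros; reflexivity. Qed.
Lemma Cmod_csum {A} (l : list A) F : Cmod (csum l F) <= rsum l (fun x => Cmod (F x)).
Proof. induction l. unfold csum, rsum; simpl. rewrite Cmod_0; lra.
  rewrite csum_cons, rsum_cons. eapply Rle_trans. apply Cmod_triangle. lra. Qed.
Lemma csum_single {A} (l : list A) F w : NoDup l -> In w l ->
  (forall z, In z l -> z <> w -> F z = RtoC 0) -> csum l F = F w.
Proof. induction l; intros Hn Hi H. destruct Hi. inversion Hn; subst.
  rewrite csum_cons. destruct Hi as [<- | Hi].
  - rewrite csum_zero. ring. intros x Hx. apply H. simpl; auto. intro; subst; auto.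
  - rewrite IHl; auto. rewrite H. ring. simpl; auto. intro; subst; auto.
    intros; apply H; simpl; auto. Qed.

Lemma csum_geom (u : C) n : Cmult (Cminus u (RtoC 1)) (csum (seq 0 n) (fun j => Cpow u j)) = Cminus (Cpow u n) (RtoC 1).
Proof. induction n. unfold csum; simpl; ring.
  rewrite seq_S, csum_app, Cmult_plus_distr_l, IHn. simpl. unfold csum; simpl. ring. Qed.

Lemma csum_geom0 (u : C) n : Cpow u n = RtoC 1 -> u <> RtoC 1 -> csum (seq 0 n) (fun j => Cpow u j) = RtoC 0.
Proof. intros H1 H2. pose proof (csum_geom u n) as H. rewrite H1 in H.
  assert (Hne : Cminus u (RtoC 1) <> RtoC 0). { intro E. apply H2.
    replace u with (Cplus (Cminus u (RtoC 1)) (RtoC 1)) by ring. rewrite E; ring. }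
  replace (csum (seq 0 n) (fun j => Cpow u j)) with
    (Cmult (Cinv (Cminus u (RtoC 1))) (Cmult (Cminus u (RtoC 1)) (csum (seq 0 n) (fun j => Cpow u j)))).
  rewrite H. ring. field. auto. Qed.


Lemma demoivre (a : R) k : Cpow (cos a, sin a) k = (cos (INR k * a), sin (INR k * a)).
Proof. induction k. simpl. rewrite Rmult_0_l, cos_0, sin_0. reflexivity.
  rewrite Cpow_S, IHk. rewrite S_INR. replace ((INR k + 1) * a) with (a + INR k * a) by ring.
  rewrite cos_plus, sin_plus. unfold Cmult; simpl. f_equal; ring. Qed.

Definition om (n : nat) : C := (cos (2*PI/INR n), sin (2*PI/INR n)).

Lemma om_pow_n n : (1 <= n)%nat -> Cpow (om n) n = RtoC 1.
Proof. intros H. unfold om. rewrite demoivre.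
  replace (INR n * (2 * PI / INR n)) with (2*PI). rewrite cos_2PI, sin_2PI. reflexivity.
  field. apply not_0_INR; lia. Qed.

Lemma om_prim n k : (0 < k)%nat -> (k < n)%nat -> Cpow (om n) k <> RtoC 1.
Proof. intros H1 H2. unfold om. rewrite demoivre. intro E. injection E as E1 E2.
  set (x := INR k * (2 * PI / INR n)) in *.
  assert (Hn : 0 < INR n) by (apply lt_0_INR; lia).
  assert (Hk : 0 < INR k) by (apply lt_0_INR; lia).
  assert (Hkn : INR k < INR n) by (apply lt_INR; lia).
  pose proof PI_RGT_0.
  assert (0 < x). { unfold x. apply Rmult_lt_0_compat; auto. apply Rdiv_lt_0_compat; lra. }
  assert (x < 2*PI). { unfold x. replace (INR k * (2 * PI / INR n)) with ((2*PI) * (INR k / INR n)) by (field; lra).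
    rewrite <- (Rmult_1_r (2*PI)) at 2. apply Rmult_lt_compat_l. lra. unfold Rdiv. apply (Rmult_lt_reg_r (INR n)); [lra|]. rewrite Rmult_assoc, Rinv_l, Rmult_1_r, Rmult_1_l; lra. }
  destruct (sin_eq_O_2PI_0 x) as [E|[E|E]]; try lra. rewrite E, cos_PI in E1. lra. Qed.

Lemma Cmod_root u n : (1 <= n)%nat -> Cpow u n = RtoC 1 -> Cmod u = 1.
Proof. intros Hn H. assert (E : Cmod u ^ n = 1) by (rewrite <- Cmod_pow, H; apply Cmod_1).
  pose proof (Cmod_ge_0 u). destruct (Rtotal_order (Cmod u) 1) as [L|[L|L]]; auto.
  - exfalso. assert (0 <= Cmod u ^ n < 1). { apply pow_lt_1_compat; [lra|lia]. } lra.
  - exfalso. assert (1 < Cmod u ^ n). { apply Rlt_pow_R1; [lra|lia]. } lra. Qed.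

Lemma conj_mul u : Cmod u = 1 -> Cmult u (Cconj u) = RtoC 1.
Proof. intros H. rewrite <- Cmod2_conj, H. f_equal. ring. Qed.
Lemma conj_mul' u : Cmod u = 1 -> Cmult (Cconj u) u = RtoC 1.
Proof. intros H. rewrite Cmult_comm. apply conj_mul; auto. Qed.

Lemma Cmod_om n : Cmod (om n) = 1.
Proof. unfold om, Cmod. cbn [fst snd]. replace (_ ^ 2 + _ ^ 2) with 1. apply sqrt_1.
  rewrite <- (sin2_cos2 (2*PI/INR n)). unfold Rsqr. ring. Qed.

Lemma Cmod_pow1 u k : Cmod u = 1 -> Cmod (Cpow u k) = 1.
Proof. intros H. rewrite Cmod_pow, H. apply pow1. Qed.

Lemma Cpow_nz1 u k : Cmod u = 1 -> Cpow u k <> RtoC 0.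
Proof. intros H E. pose proof (Cmod_pow1 u k H). rewrite E, Cmod_0 in H0. lra. Qed.

Lemma om_inj n a b : (a < n)%nat -> (b < n)%nat -> Cpow (om n) a = Cpow (om n) b -> a = b.
Proof. intros Ha Hb E.
  assert (forall a b, (a < b)%nat -> (b < n)%nat -> Cpow (om n) a = Cpow (om n) b -> False).
  { clear. intros a b H1 H2 E. apply (om_prim n (b - a)); try lia.
    assert (Cpow (om n) b = Cmult (Cpow (om n) a) (Cpow (om n) (b - a))).
    { rewrite <- Cpow_add_r. f_equal. lia. }
    rewrite <- E in H. pose proof (Cpow_nz1 (om n) a (Cmod_om n)).
    replace (Cpow (om n) (b - a)) with (Cmult (Cinv (Cpow (om n) a)) (Cmult (Cpow (om n) a) (Cpow (om n) (b - a)))) by (field; auto).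
    rewrite <- H. field; auto. }
  destruct (Nat.lt_total a b) as [L|[L|L]]; auto; exfalso; eauto. Qed.

Definition roots (n : nat) : list C := map (fun j => Cpow (om n) j) (seq 0 n).

Lemma roots_pow n z : (1 <= n)%nat -> In z (roots n) -> Cpow z n = RtoC 1.
Proof. intros Hn H. unfold roots in H. apply in_map_iff in H. destruct H as [j [<- _]].
  rewrite <- Cpow_mult_r, Nat.mul_comm, Cpow_mult_r, om_pow_n by auto. apply Cpow_1_l. Qed.

Lemma roots_nodup n : NoDup (roots n).
Proof. unfold roots. apply NoDup_map_NoDup_ForallPairs. intros a b Ha Hb E.
  apply in_seq in Ha, Hb. apply (om_inj n); auto; lia. apply seq_NoDup. Qed.

Lemma roots_1 n : (1 <= n)%nat -> In (RtoC 1) (roots n).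
Proof. intros. unfold roots. apply in_map_iff. exists 0%nat. split. reflexivity. apply in_seq; lia. Qed.

Lemma roots_complete n z : (1 <= n)%nat -> Cpow z n = RtoC 1 -> In z (roots n).
Proof. intros Hn Hz. apply NNPP. intro Hno.
  pose proof (Cmod_root z n Hn Hz) as Hmz.
  set (T := csum (seq 0 n) (fun j => csum (seq 0 n) (fun k => Cpow (Cmult z (Cconj (Cpow (om n) j))) k))).
  assert (T0 : T = RtoC 0). { unfold T. apply csum_zero. intros j Hj. apply in_seq in Hj.
    apply csum_geom0.
    - rewrite Cpow_mult_l, Hz, <- Cpow_conj, <- Cpow_mult_r, Nat.mul_comm, Cpow_mult_r, om_pow_n, Cpow_1_l by lia.
      apply injective_projections; simpl; ring.
    - intro E. apply Hno. unfold roots. apply in_map_iff. exists j. split; [|apply in_seq; lia].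
      assert (Cmod (Cpow (om n) j) = 1) by (apply Cmod_pow1, Cmod_om).
      rewrite <- (Cmult_1_r z), <- (conj_mul' (Cpow (om n) j)), Cmult_assoc, E by auto. ring. }
  assert (Tn : T = RtoC (INR n)). { unfold T. rewrite csum_swap.
    assert (Hseq: seq 0 n = 0%nat :: seq 1 (n-1)) by (destruct n; [lia|simpl; rewrite Nat.sub_0_r; reflexivity]).
    rewrite Hseq at 1. rewrite csum_cons.
    rewrite (csum_zero (seq 1 (n-1))).
    - rewrite (csum_ext _ _ (fun _ => RtoC 1)). rewrite csum_const, length_seq.
      apply injective_projections; simpl; ring. intros; simpl. reflexivity.
    - intros k Hk. apply in_seq in Hk.
      rewrite (csum_ext _ _ (fun j => Cmult (Cpow z k) (Cpow (Cconj (Cpow (om n) k)) j))).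
      rewrite csum_scal, csum_geom0. ring.
      + rewrite <- Cpow_conj, <- Cpow_mult_r, Nat.mul_comm, Cpow_mult_r, om_pow_n, Cpow_1_l by lia.
        apply injective_projections; simpl; ring.
      + intro E. apply (om_prim n k); try lia. rewrite <- (Cconj_conj (Cpow _ k)), E.
        apply injective_projections; simpl; ring.
      + intros j _. rewrite Cpow_mult_l. f_equal. rewrite !Cpow_conj, <- !Cpow_mult_r, Nat.mul_comm. reflexivity. }
  rewrite T0 in Tn. injection Tn as Tn. symmetry in Tn. revert Tn. apply not_0_INR. lia. Qed.


Lemma sc_dvd_le s a b : (a <= b)%nat -> Nat.divide (sc s a) (sc s b).
Proof. induction 1. apply Nat.divide_refl. eapply Nat.divide_trans; eauto. apply sc_dvd. Qed.

Lemma zs_mod s (x : ZS s) a b : (a <= b)%nat -> zs x a = Nat.modulo (zs x b) (sc s a).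
Proof. induction 1. rewrite Nat.mod_small; auto. apply zs_lt.
  rewrite IHle, (zs_coh s x m), mod_mod_dvd; auto. apply sc_dvd_le; auto. Qed.

Lemma zs_eq_down s (x y : ZS s) a b : (a <= b)%nat -> zs y b = zs x b -> zs y a = zs x a.
Proof. intros H E. rewrite (zs_mod s x a b), (zs_mod s y a b), E; auto. Qed.

Lemma root_up s u a b : (a <= b)%nat -> Cpow u (sc s a) = RtoC 1 -> Cpow u (sc s b) = RtoC 1.
Proof. intros H E. destruct (sc_dvd_le s a b H) as [k Hk]. rewrite Hk, Nat.mul_comm, Cpow_mult_r, E.
  apply Cpow_1_l. Qed.

Lemma pow_mod u n k : (0 < n)%nat -> Cpow u n = RtoC 1 -> Cpow u k = Cpow u (Nat.modulo k n).
Proof. intros Hn E. rewrite (Nat.div_mod_eq k n) at 1. rewrite Cpow_add_r, Cpow_mult_r, E, Cpow_1_l. ring. Qed.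

Lemma root_zs s u (x : ZS s) a b : Cpow u (sc s a) = RtoC 1 -> Cpow u (sc s b) = RtoC 1 ->
  Cpow u (zs x a) = Cpow u (zs x b).
Proof. intros Ha Hb. destruct (Nat.le_ge_cases a b) as [L|L].
  - rewrite (zs_mod s x a b L). symmetry. apply pow_mod; auto. apply sc_pos.
  - rewrite (zs_mod s x b a L). apply pow_mod; auto. apply sc_pos. Qed.

Lemma chi_eq s u m (x : ZS s) : Cpow u (sc s m) = RtoC 1 -> chi s u x = Cpow u (zs x m).
Proof. intros H. unfold chi, level.
  pose proof (epsilon_spec (inhabits 0%nat) (fun m => Cpow u (sc s m) = RtoC 1) (ex_intro _ m H)) as E.
  apply root_zs; auto. Qed.

Lemma zs_phi s (x : ZS s) m : zs (phi s x) m = Nat.modulo (zs x m + 1) (sc s m).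
Proof. unfold phi, zadd, zone; simpl. apply Nat.Div0.add_mod_idemp_r. Qed.

Lemma pow_phi s u m (x : ZS s) : Cpow u (sc s m) = RtoC 1 ->
  Cpow u (zs (phi s x) m) = Cmult u (Cpow u (zs x m)).
Proof. intros H. rewrite zs_phi, <- pow_mod; auto. rewrite Nat.add_comm, Cpow_add_r, Cpow_1_r. reflexivity.
  apply sc_pos. Qed.

Lemma Zcont_loc s m (F : nat -> C) : Zcont s (fun y => F (zs y m)).
Proof. intros x eps He. exists m. intros y E. rewrite E.
  replace (Cminus (F (zs x m)) (F (zs x m))) with (RtoC 0) by ring. rewrite Cmod_0. auto. Qed.

Lemma Zcont_lin s a (f g : ZS s -> C) : Zcont s f -> Zcont s g -> Zcont s (fun x => Cplus (Cmult a (f x)) (g x)).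
Proof. intros Hf Hg x eps He.
  destruct (Hf x (eps / 2 / (Cmod a + 1))) as [m1 H1].
  { apply Rdiv_lt_0_compat. lra. pose proof (Cmod_ge_0 a); lra. }
  destruct (Hg x (eps / 2)) as [m2 H2]. lra.
  exists (Nat.max m1 m2). intros y E.
  specialize (H1 y (zs_eq_down s x y _ _ (Nat.le_max_l _ _) E)).
  specialize (H2 y (zs_eq_down s x y _ _ (Nat.le_max_r _ _) E)).
  replace (Cminus (Cplus (Cmult a (f y)) (g y)) (Cplus (Cmult a (f x)) (g x)))
    with (Cplus (Cmult a (Cminus (f y) (f x))) (Cminus (g y) (g x))) by ring.
  eapply Rle_lt_trans. apply Cmod_triangle. rewrite Cmod_mult.
  pose proof (Cmod_ge_0 a). pose proof (Cmod_ge_0 (Cminus (f y) (f x))).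
  assert (Cmod a * Cmod (Cminus (f y) (f x)) <= eps / 2).
  { apply Rle_trans with ((Cmod a + 1) * (eps / 2 / (Cmod a + 1))).
    apply Rmult_le_compat; lra. right. field. lra. }
  lra. Qed.

Lemma Zcont_const s c : Zcont s (fun _ => c).
Proof. apply (Zcont_loc s 0 (fun _ => c)). Qed.

Lemma Zcont_mult_loc s m (f : ZS s -> C) (F : nat -> C) : Zcont s f -> Zcont s (fun y => Cmult (f y) (F (zs y m))).
Proof. intros Hf x eps He. set (b := Cmod (F (zs x m))).
  destruct (Hf x (eps / (b + 1))) as [m1 H1].
  { apply Rdiv_lt_0_compat. lra. pose proof (Cmod_ge_0 (F (zs x m))); unfold b; lra. }
  exists (Nat.max m1 m). intros y E.
  specialize (H1 y (zs_eq_down s x y _ _ (Nat.le_max_l _ _) E)).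
  rewrite (zs_eq_down s x y _ _ (Nat.le_max_r _ _) E).
  replace (Cminus (Cmult (f y) (F (zs x m))) (Cmult (f x) (F (zs x m))))
    with (Cmult (Cminus (f y) (f x)) (F (zs x m))) by ring.
  rewrite Cmod_mult. fold b. pose proof (Cmod_ge_0 (F (zs x m))). fold b in H.
  pose proof (Cmod_ge_0 (Cminus (f y) (f x))).
  apply Rle_lt_trans with (eps / (b + 1) * b). apply Rmult_le_compat_r; lra.
  apply Rlt_le_trans with (eps / (b+1) * (b + 1)). apply Rmult_lt_compat_l. apply Rdiv_lt_0_compat; lra. lra.
  right; field; lra. Qed.

Lemma Zcont_Re s (f : ZS s -> C) : Zcont s f -> Zcont s (fun y => RtoC (Re (f y))).
Proof. intros Hf x eps He. destruct (Hf x eps He) as [m H]. exists m. intros y E.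
  replace (Cminus (RtoC (Re (f y))) (RtoC (Re (f x)))) with (RtoC (Re (Cminus (f y) (f x))))
    by (apply injective_projections; unfold Re, Cminus, Cplus, Copp, RtoC; simpl; ring).
  rewrite Cmod_R. eapply Rle_lt_trans; [apply re_le_Cmod| apply H; auto]. Qed.

Lemma Zcont_Im s (f : ZS s -> C) : Zcont s f -> Zcont s (fun y => RtoC (Im (f y))).
Proof. intros Hf x eps He. destruct (Hf x eps He) as [m H]. exists m. intros y E.
  eapply Rle_lt_trans; [|apply (H y E)].
  replace (Cminus (RtoC (Im (f y))) (RtoC (Im (f x)))) with (RtoC (Im (f y) - Im (f x))).
  rewrite Cmod_R. pose proof (Rmax_Cmod (Cminus (f y) (f x))). simpl in H0.
  unfold Im. replace (snd (f y) - snd (f x)) with (snd (f y) + - snd (f x)) by ring.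
  eapply Rle_trans; [|apply H0]. apply Rmax_r.
  apply injective_projections; simpl; ring. Qed.

Lemma Zcont_phi s (f : ZS s -> C) : Zcont s f -> Zcont s (fun x => f (phi s x)).
Proof. intros Hf x eps He. destruct (Hf (phi s x) eps He) as [m H]. exists m. intros y E.
  apply H. rewrite !zs_phi, E. reflexivity. Qed.


Lemma im_le_Cmod c : Rabs (Im c) <= Cmod c.
Proof. eapply Rle_trans; [|apply Rmax_Cmod]. apply Rmax_r. Qed.

Lemma Cmod_real z : Im z = 0 -> Cmod z = Rabs (Re z).
Proof. intros H. rewrite <- Cmod_R. f_equal. apply injective_projections; simpl; auto. Qed.

Lemma Zcont_ext s (f g : ZS s -> C) : (forall x, f x = g x) -> Zcont s f -> Zcont s g.
Proof. intros H. replace g with f; auto. apply functional_extensionality; auto. Qed.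

Lemma Zcont_plus s (f g : ZS s -> C) : Zcont s f -> Zcont s g -> Zcont s (fun x => Cplus (f x) (g x)).
Proof. intros. eapply Zcont_ext; [|apply (Zcont_lin s (RtoC 1) f g); auto]. intros; simpl; ring. Qed.
Lemma Zcont_scal s a (f : ZS s -> C) : Zcont s f -> Zcont s (fun x => Cmult a (f x)).
Proof. intros. eapply Zcont_ext; [|apply (Zcont_lin s a f (fun _ => RtoC 0)); auto using Zcont_const]. intros; simpl; ring. Qed.
Lemma Zcont_minus s (f g : ZS s -> C) : Zcont s f -> Zcont s g -> Zcont s (fun x => Cminus (f x) (g x)).
Proof. intros. eapply Zcont_ext; [|apply (Zcont_lin s (RtoC (-1)) g f); auto]. intros; simpl.
  apply injective_projections; simpl; ring. Qed.
Lemma Zcont_csum {A} s (l : list A) (F : A -> ZS s -> C) : (forall z, In z l -> Zcont s (F z)) ->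
  Zcont s (fun y => csum l (fun z => F z y)).
Proof. induction l; intros H. apply (Zcont_const s (RtoC 0)).
  apply (Zcont_ext s (fun y => Cplus (F a y) (csum l (fun z => F z y)))). intros; reflexivity.
  apply Zcont_plus. apply H; simpl; auto. apply IHl. intros; apply H; simpl; auto. Qed.

Section Integral.
Variable s : scale.
Variable I : (ZS s -> C) -> C.
Hypothesis HI : is_haar_integral s I.

Lemma I_ext (f g : ZS s -> C) : (forall x, f x = g x) -> I f = I g.
Proof. intros H. f_equal. apply functional_extensionality; auto. Qed.

Lemma I_lin a (f g : ZS s -> C) : Zcont s f -> Zcont s g ->
  I (fun x => Cplus (Cmult a (f x)) (g x)) = Cplus (Cmult a (I f)) (I g).
Proof. apply (proj1 HI). Qed.

Lemma I_0 : I (fun _ => RtoC 0) = RtoC 0.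
Proof. pose proof (I_lin (RtoC 1) _ _ (Zcont_const s (RtoC 0)) (Zcont_const s (RtoC 0))) as H.
  rewrite (I_ext _ (fun _ => RtoC 0)) in H by (intros; ring).
  replace (I (fun _ => RtoC 0)) with (Cminus (Cplus (Cmult (RtoC 1) (I (fun _ => RtoC 0))) (I (fun _ => RtoC 0))) (I (fun _ => RtoC 0))) by ring.
  rewrite <- H. ring. Qed.

Lemma I_scal a f : Zcont s f -> I (fun x => Cmult a (f x)) = Cmult a (I f).
Proof. intros Hf. pose proof (I_lin a f _ Hf (Zcont_const s (RtoC 0))) as H.
  rewrite I_0 in H. rewrite (I_ext _ (fun x => Cplus (Cmult a (f x)) (RtoC 0))) by (intros; ring).
  rewrite H. ring. Qed.

Lemma I_plus f g : Zcont s f -> Zcont s g -> I (fun x => Cplus (f x) (g x)) = Cplus (I f) (I g).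
Proof. intros. rewrite (I_ext _ (fun x => Cplus (Cmult (RtoC 1) (f x)) (g x))) by (intros; ring).
  rewrite I_lin; auto. ring. Qed.

Lemma I_minus f g : Zcont s f -> Zcont s g -> I (fun x => Cminus (f x) (g x)) = Cminus (I f) (I g).
Proof. intros. rewrite (I_ext _ (fun x => Cplus (Cmult (RtoC (-1)) (g x)) (f x))).
  rewrite I_lin; auto. apply injective_projections; simpl; ring.
  intros; apply injective_projections; simpl; ring. Qed.

Lemma I_csum {A} (l : list A) (F : A -> ZS s -> C) : (forall z, In z l -> Zcont s (F z)) ->
  I (fun y => csum l (fun z => F z y)) = csum l (fun z => I (F z)).
Proof. induction l; intros H. apply I_0.
  rewrite csum_cons. rewrite <- IHl by (intros; apply H; simpl; auto).
  rewrite <- I_plus. apply I_ext; intros; reflexivity. apply H; simpl; auto.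
  apply Zcont_csum. intros; apply H; simpl; auto. Qed.

Lemma I_phi f : Zcont s f -> I (fun x => f (phi s x)) = I f.
Proof. intros Hf. apply (proj2 (proj2 (proj2 HI)) (zone s) f Hf). Qed.

Lemma I_one : I (fun _ => RtoC 1) = RtoC 1.
Proof. apply (proj1 (proj2 (proj2 HI))). Qed.

Lemma I_const c : I (fun _ => c) = c.
Proof. rewrite (I_ext _ (fun _ => Cmult c (RtoC 1))) by (intros; ring).
  rewrite I_scal, I_one. ring. apply Zcont_const. Qed.

Lemma I_pos f : Zcont s f -> (forall x, Im (f x) = 0 /\ 0 <= Re (f x)) -> Im (I f) = 0 /\ 0 <= Re (I f).
Proof. apply (proj1 (proj2 HI)). Qed.

Lemma I_real_bound r u M : Zcont s r -> Zcont s u -> (forall y, Im (r y) = 0) ->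
  (forall y, Im (u y) = 0 /\ 0 <= Re (u y)) -> (forall y, Rabs (Re (r y)) <= M * Re (u y)) ->
  Im (I r) = 0 /\ Rabs (Re (I r)) <= M * Re (I u).
Proof. intros Hr Hu Hri Hup Hb.
  assert (P1 := I_pos (fun y => Cplus (Cmult (RtoC M) (u y)) (r y)) (Zcont_lin s _ _ _ Hu Hr)).
  assert (P2 := I_pos (fun y => Cplus (Cmult (RtoC M) (u y)) (Cmult (RtoC (-1)) (r y)))
     (Zcont_lin s _ _ _ Hu (Zcont_scal s _ _ Hr))).
  rewrite I_lin in P1 by auto. rewrite I_lin, I_scal in P2 by auto using Zcont_scal.
  destruct (I_pos u Hu Hup) as [Hu1 Hu2].
  assert (A1 : forall y, Im (Cplus (Cmult (RtoC M) (u y)) (r y)) = 0 /\ 0 <= Re (Cplus (Cmult (RtoC M) (u y)) (r y))).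
  { intros y. specialize (Hri y). destruct (Hup y). specialize (Hb y).
    unfold Im, Re, Cplus, Cmult, RtoC in *; simpl in *. split. rewrite Hri, H; ring.
    rewrite H. pose proof (Rle_abs (fst (r y))). pose proof (Rabs_maj2 (fst (r y))). lra. }
  assert (A2 : forall y, Im (Cplus (Cmult (RtoC M) (u y)) (Cmult (RtoC (-1)) (r y))) = 0 /\ 0 <= Re (Cplus (Cmult (RtoC M) (u y)) (Cmult (RtoC (-1)) (r y)))).
  { intros y. specialize (Hri y). destruct (Hup y). specialize (Hb y).
    unfold Im, Re, Cplus, Cmult, RtoC in *; simpl in *. split. rewrite Hri, H; ring.
    rewrite H, Hri. pose proof (Rle_abs (fst (r y))). pose proof (Rabs_maj2 (fst (r y))). lra. }
  specialize (P1 A1). specialize (P2 A2).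
  unfold Im, Re, Cplus, Cmult, RtoC in *; simpl in *. destruct P1, P2.
  rewrite Hu1 in *. split. lra. apply Rabs_le. lra. Qed.

Lemma I_bound k u M : Zcont s k -> Zcont s u ->
  (forall y, Im (u y) = 0 /\ 0 <= Re (u y)) -> (forall y, Cmod (k y) <= M * Re (u y)) ->
  Cmod (I k) <= 2 * M * Re (I u).
Proof. intros Hk Hu Hup Hb.
  assert (Hkr := Zcont_Re s k Hk). assert (Hki := Zcont_Im s k Hk).
  destruct (I_real_bound _ u M Hkr Hu (fun y => eq_refl) Hup) as [R1 R2].
  { intros y. simpl. eapply Rle_trans; [apply re_le_Cmod|apply Hb]. }
  destruct (I_real_bound _ u M Hki Hu (fun y => eq_refl) Hup) as [R3 R4].
  { intros y. simpl. eapply Rle_trans; [apply im_le_Cmod|apply Hb]. }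
  rewrite (I_ext k (fun y => Cplus (Cmult Ci (RtoC (Im (k y)))) (RtoC (Re (k y))))).
  rewrite I_lin by auto. eapply Rle_trans. apply Cmod_triangle. rewrite Cmod_mult, Cmod_Ci.
  rewrite !Cmod_real by auto. lra.
  intros y. apply injective_projections; unfold Re, Im, Ci, RtoC, Cplus, Cmult; simpl; ring. Qed.

End Integral.


Lemma csum_map {A B} (g : A -> B) l F : csum (map g l) F = csum l (fun a => F (g a)).
Proof. unfold csum. rewrite map_map. reflexivity. Qed.
Lemma rsum_const {A} (l : list A) a : rsum l (fun _ => a) = INR (length l) * a.
Proof. induction l. unfold rsum; simpl; ring. rewrite rsum_cons, IHl. simpl length. rewrite S_INR. ring. Qed.

Lemma Cmod_le_ReIm z : Cmod z <= Rabs (Re z) + Rabs (Im z).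
Proof. replace z with (Cplus (RtoC (Re z)) (Cmult Ci (RtoC (Im z)))) at 1.
  eapply Rle_trans. apply Cmod_triangle. rewrite Cmod_mult, Cmod_Ci, !Cmod_R. lra.
  apply injective_projections; unfold Re, Im, Ci, RtoC, Cplus, Cmult; simpl; ring. Qed.

Lemma small_eq a b : (forall eps, 0 < eps -> Cmod (Cminus a b) <= eps) -> a = b.
Proof. intros H. assert (Cmod (Cminus a b) = 0).
  { apply Rle_antisym. apply Rnot_lt_le. intro L. specialize (H _ (Rmult_lt_0_compat _ _ L (Rinv_0_lt_compat 2 Rlt_0_2))).
    lra. apply Cmod_ge_0. }
  apply Cmod_eq_0 in H0. replace a with (Cplus (Cminus a b) b) by ring. rewrite H0. ring. Qed.

Lemma conj_root u n : Cpow u n = RtoC 1 -> Cpow (Cconj u) n = RtoC 1.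
Proof. intros H. rewrite <- Cpow_conj, H. apply injective_projections; simpl; ring. Qed.

Lemma Cconj_1 : Cconj (RtoC 1) = RtoC 1.
Proof. apply injective_projections; simpl; ring. Qed.

Lemma exists_order z k : (0 < k)%nat -> Cpow z k = RtoC 1 -> exists n, is_order z n.
Proof. revert z. induction k as [k IH] using lt_wf_ind. intros z Hk E.
  destruct (classic (exists k', (0 < k')%nat /\ (k' < k)%nat /\ Cpow z k' = RtoC 1)) as [[k' [H1 [H2 H3]]]|N].
  - eapply IH; eauto.
  - exists k. split; auto. split; auto. intros k' H1 H2 H3. apply N. eauto. Qed.

Lemma Cmod_1_pow z k : Cmod z = 1 -> Cmod (Cminus (RtoC 1) (Cpow z k)) <= INR k * Cmod (Cminus z (RtoC 1)).
Proof. intros H. induction k. simpl. replace (Cminus (RtoC 1) (RtoC 1)) with (RtoC 0) by ring. rewrite Cmod_0. lra.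
  replace (Cminus (RtoC 1) (Cpow z (S k))) with (Cplus (Cminus (RtoC 1) (Cpow z k)) (Cmult (Cpow z k) (Cminus (RtoC 1) z)))
    by (rewrite Cpow_S; ring).
  eapply Rle_trans. apply Cmod_triangle. rewrite Cmod_mult, Cmod_pow1 by auto. rewrite S_INR.
  replace (Cminus (RtoC 1) z) with (Copp (Cminus z (RtoC 1))) by ring. rewrite Cmod_opp. lra. Qed.

Lemma order_bound z n : is_order z n -> z <> RtoC 1 -> 1 <= INR n * Cmod (Cminus z (RtoC 1)).
Proof. intros [Hn [Hz Hmin]] Hne.
  assert (Hmz : Cmod z = 1) by (apply (Cmod_root z n); auto).
  assert (Hs : csum (seq 0 n) (fun j => Cpow z j) = RtoC 0) by (apply csum_geom0; auto).
  assert (E : RtoC (INR n) = csum (seq 0 n) (fun j => Cminus (RtoC 1) (Cpow z j))).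
  { rewrite (csum_ext _ _ (fun j => Cplus (RtoC 1) (Cmult (RtoC (-1)) (Cpow z j)))).
    rewrite csum_plus, csum_scal. change (csum (seq 0 n) (Cpow z)) with (csum (seq 0 n) (fun j => Cpow z j)). rewrite Hs, csum_const, length_seq. apply injective_projections; simpl; ring.
    intros; apply injective_projections; simpl; ring. }
  assert (B : INR n <= INR n * (INR n * Cmod (Cminus z (RtoC 1)))).
  { replace (INR n) with (Cmod (RtoC (INR n))) at 1 by (rewrite Cmod_R; apply Rabs_pos_eq, pos_INR).
    rewrite E. eapply Rle_trans. apply Cmod_csum.
    eapply Rle_trans. apply (rsum_le _ _ (fun _ => INR n * Cmod (Cminus z (RtoC 1)))).
    intros j Hj. apply in_seq in Hj. eapply Rle_trans. apply Cmod_1_pow; auto.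
    apply Rmult_le_compat_r. apply Cmod_ge_0. apply le_INR; lia.
    rewrite rsum_const, length_seq. lra. }
  assert (0 < INR n) by (apply lt_0_INR; auto).
  apply (Rmult_le_reg_l (INR n)); auto. lra. Qed.

Lemma Rpower_base1 y : Rpower 1 y = 1.
Proof. unfold Rpower. rewrite ln_1, Rmult_0_r, exp_0. reflexivity. Qed.

Lemma csum_minus {A} (l : list A) F G : Cminus (csum l F) (csum l G) = csum l (fun x => Cminus (F x) (G x)).
Proof. induction l. unfold csum; simpl; ring. rewrite !csum_cons, <- IHl. ring. Qed.

Lemma lim_approx (u : nat -> R) :
  (forall eps, 0 < eps -> exists M, forall m p, (M <= m)%nat -> (m <= p)%nat -> Rabs (u p - u m) <= eps) ->
  forall eps M, (forall m p, (M <= m)%nat -> (m <= p)%nat -> Rabs (u p - u m) <= eps) ->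
  forall m, (M <= m)%nat -> Rabs (real (Lim_seq u) - u m) <= eps.
Proof. intros Hc eps M HM m Hm.
  assert (Ex : ex_finite_lim_seq u).
  { apply ex_lim_seq_cauchy_corr. intros e. destruct (Hc (e/2)) as [N HN]. destruct e; simpl; lra.
    exists N. intros a b Ha Hb. destruct (Nat.le_ge_cases a b).
    - rewrite Rabs_minus_sym. eapply Rle_lt_trans. apply HN; auto. destruct e; simpl; lra.
    - eapply Rle_lt_trans. apply HN; auto. destruct e; simpl; lra. }
  destruct Ex as [l Hl]. rewrite (is_lim_seq_unique _ _ Hl). simpl.
  apply (is_lim_seq_incr_n u m) in Hl.
  assert (L1 : Rbar_le l (u m + eps)).
  { apply (is_lim_seq_le (fun p => u (p + m)%nat) (fun _ => u m + eps) l (u m + eps)); auto.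
    intros p. specialize (HM m (p + m)%nat Hm ltac:(lia)). apply Rabs_le_between' in HM. lra.
    apply is_lim_seq_const. }
  assert (L2 : Rbar_le (u m - eps) l).
  { apply (is_lim_seq_le (fun _ => u m - eps) (fun p => u (p + m)%nat) (u m - eps) l); auto.
    intros p. specialize (HM m (p + m)%nat Hm ltac:(lia)). apply Rabs_le_between' in HM. lra.
    apply is_lim_seq_const. }
  simpl in L1, L2. apply Rabs_le. lra. Qed.

Section Main.
Variable s : scale.
Variable lam : C -> R.
Variable I : (ZS s -> C) -> C.
Hypothesis Hlam : is_na_length s lam.
Hypothesis Hgrow : grows_fast s lam.
Hypothesis HI : is_haar_integral s I.

Definition Rr m := roots (sc s m).

Lemma sc_ge1 m : (1 <= sc s m)%nat.
Proof. apply sc_pos. Qed.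

Lemma Rr_iff m z : In z (Rr m) <-> Cpow z (sc s m) = RtoC 1.
Proof. split. apply roots_pow, sc_ge1. apply roots_complete, sc_ge1. Qed.

Lemma Rr_mono m p z : (m <= p)%nat -> In z (Rr m) -> In z (Rr p).
Proof. intros H. rewrite !Rr_iff. apply root_up; auto. Qed.

Lemma Rr_dual m z : In z (Rr m) -> in_dual s z.
Proof. intros H. exists m. apply Rr_iff; auto. Qed.

Lemma Cmod_dual z : in_dual s z -> Cmod z = 1.
Proof. intros [m H]. apply (Cmod_root z (sc s m)); auto using sc_ge1. Qed.

Lemma lam_ge1 z : in_dual s z -> 1 <= lam z.
Proof. apply (proj1 Hlam). Qed.

Lemma inv_bound : exists (K : nat) (A : R), 0 < A /\
  forall z, in_dual s z -> z <> RtoC 1 -> / Cmod (Cminus z (RtoC 1)) <= A * lam z ^ K.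
Proof.
  destruct Hgrow as [al [c [Hal [Hc Hg]]]].
  assert (Hc1 : c <= 1).
  { assert (D1 : in_dual s (RtoC 1)) by (exists 0%nat; apply Cpow_1_l).
    assert (O1 : is_order (RtoC 1) 1). { split. lia. split. apply Cpow_1_r. intros; lia. }
    pose proof (Hg _ _ D1 O1).
    simpl in H. rewrite Rpower_base1 in H. destruct Hlam as [_ [Hl _]].
    rewrite (proj2 (Hl _ D1) eq_refl) in H. lra. }
  destruct (archimed (/ al)) as [Ha _].
  set (K := Z.to_nat (up (/ al))).
  assert (HK : / al <= INR K). { unfold K. rewrite INR_IZR_INZ, Z2Nat.id. lra.
    apply le_IZR. pose proof (Rinv_0_lt_compat al Hal). lra. }
  exists K, (/ c ^ K). split. apply Rinv_0_lt_compat, pow_lt; auto.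
  intros z Dz Hne. destruct (exists_order z (sc s (proj1_sig (constructive_indefinite_description _ Dz)))) as [n On].
  apply sc_pos. apply (proj2_sig (constructive_indefinite_description _ Dz)).
  pose proof (order_bound z n On Hne) as Ob.
  assert (Hn : (0 < n)%nat) by apply On.
  assert (HnR : 0 < INR n) by (apply lt_0_INR; auto).
  assert (Hd : 0 < Cmod (Cminus z (RtoC 1))).
  { apply Cmod_gt_0. intro E. apply Hne. replace z with (Cplus (Cminus z (RtoC 1)) (RtoC 1)) by ring. rewrite E; ring. }
  assert (Hinv : / Cmod (Cminus z (RtoC 1)) <= INR n).
  { apply (Rmult_le_reg_r (Cmod (Cminus z (RtoC 1)))); auto. rewrite Rinv_l; lra. }
  eapply Rle_trans; [apply Hinv|].
  pose proof (Hg z n Dz On) as Hgz. pose proof (lam_ge1 z Dz) as Hl1.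
  assert (Hq : 1 <= lam z / c). { apply (Rmult_le_reg_r c); auto. unfold Rdiv. rewrite Rmult_assoc, Rinv_l; lra. }
  assert (E1 : INR n = Rpower (Rpower (INR n) al) (/ al)).
  { rewrite Rpower_mult, Rinv_r, Rpower_1; auto. lra. }
  rewrite E1. eapply Rle_trans. apply Rle_Rpower_l. left; apply Rinv_0_lt_compat; auto.
  split. apply exp_pos. instantiate (1 := lam z / c). apply (Rmult_le_reg_l c); auto.
  unfold Rdiv. rewrite (Rmult_comm (lam z)), <- Rmult_assoc, Rinv_r, Rmult_1_l; lra.
  eapply Rle_trans. apply Rle_Rpower; eauto. rewrite Rpower_pow by lra.
  unfold Rdiv. rewrite Rpow_mult_distr, pow_inv. lra. Qed.

Lemma levels_list l : (forall z, In z l -> in_dual s z) -> exists M, forall z, In z l -> In z (Rr M).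
Proof. induction l; intros H. exists 0%nat; intros z []. 
  destruct IHl as [M HM]. intros; apply H; simpl; auto.
  destruct (H a (or_introl eq_refl)) as [m Hm]. exists (Nat.max m M). intros z [<-|Hz].
  - apply (Rr_mono m). lia. apply Rr_iff; auto.
  - apply (Rr_mono M). lia. auto. Qed.

Lemma tail (h : C -> R) B : (forall l, NoDup l -> (forall z, In z l -> in_dual s z) -> rsum l h <= B) ->
  forall eps, 0 < eps -> exists M, forall l, NoDup l -> (forall z, In z l -> in_dual s z /\ ~ In z (Rr M)) -> rsum l h <= eps.
Proof. intros HB eps He.
  set (E := fun r => exists l, NoDup l /\ (forall z, In z l -> in_dual s z) /\ r = rsum l h).
  destruct (completeness E) as [T [HT1 HT2]].
  { exists B. intros r [l [H1 [H2 ->]]]. apply HB; auto. }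
  { exists (rsum nil h). exists nil. split. constructor. split. intros z []. reflexivity. }
  assert (Ex : exists l0, NoDup l0 /\ (forall z, In z l0 -> in_dual s z) /\ T - eps < rsum l0 h).
  { apply NNPP. intro N. assert (T <= T - eps). { apply HT2. intros r [l [H1 [H2 ->]]].
      apply Rnot_lt_le. intro L. apply N. exists l. auto. } lra. }
  destruct Ex as [l0 [N0 [D0 L0]]]. destruct (levels_list l0 D0) as [M HM].
  exists M. intros l Nl Hl.
  assert (rsum (l ++ l0) h <= T).
  { apply HT1. exists (l ++ l0). split. apply NoDup_app; auto. intros a Ha Ha0. apply (proj2 (Hl a Ha)). auto.
    split; auto. intros z Hz. apply in_app_iff in Hz. destruct Hz. apply Hl; auto. auto. }
  rewrite rsum_app in H. lra. Qed.

Definition nin (A : list C) (z : C) : bool := if excluded_middle_informative (In z A) then false else true.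
Lemma nin_spec A z : nin A z = true <-> ~ In z A.
Proof. unfold nin. destruct excluded_middle_informative; split; intros; auto; try discriminate; contradiction. Qed.

Variable f : ZS s -> C.
Hypothesis Hf : C_RD s I lam f.
Hypothesis Hf0 : I f = RtoC 0.

Definition hf z := fourier s I f z.
Definition cc z := if excluded_middle_informative (z = RtoC 1) then RtoC 0 else Cdiv (hf z) (Cminus z (RtoC 1)).
Definition gm m (x : ZS s) := csum (Rr m) (fun z => Cmult (cc z) (Cpow z (zs x m))).

Lemma hf_root m z : In z (Rr m) -> hf z = I (fun y => Cmult (f y) (Cpow (Cconj z) (zs y m))).
Proof. intros H. unfold hf, fourier. apply (I_ext s I). intros. rewrite (chi_eq s _ m); auto.
  apply conj_root, Rr_iff; auto. Qed.

Lemma hf_1 : hf (RtoC 1) = RtoC 0.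
Proof. rewrite (hf_root 0) by (apply roots_1, sc_ge1). rewrite Cconj_1.
  rewrite (I_ext s I _ f) by (intros; rewrite Cpow_1_l; ring). exact Hf0. Qed.

Lemma cc_mul z : Cmult (cc z) (Cminus z (RtoC 1)) = hf z.
Proof. unfold cc; destruct excluded_middle_informative. subst; rewrite hf_1; ring.
  field. intro E; apply n. replace z with (Cplus (Cminus z (RtoC 1)) (RtoC 1)) by ring. rewrite E; ring. Qed.

Lemma cc_bound : exists K A, 0 < A /\ forall z, in_dual s z -> Cmod (cc z) <= A * (Cmod (hf z) * lam z ^ K).
Proof. destruct inv_bound as [K [A [HA Hb]]]. exists K, A. split; auto. intros z Dz.
  pose proof (lam_ge1 z Dz). assert (0 <= lam z ^ K) by (apply pow_le; lra).
  pose proof (Cmod_ge_0 (hf z)).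
  unfold cc; destruct excluded_middle_informative. rewrite Cmod_0. apply Rmult_le_pos. lra. apply Rmult_le_pos; lra.
  assert (Hne : Cminus z (RtoC 1) <> RtoC 0). { intro E; apply n. replace z with (Cplus (Cminus z (RtoC 1)) (RtoC 1)) by ring. rewrite E; ring. }
  rewrite Cmod_div by auto. unfold Rdiv. specialize (Hb z Dz n).
  replace (A * (Cmod (hf z) * lam z ^ K)) with (Cmod (hf z) * (A * lam z ^ K)) by ring.
  apply Rmult_le_compat_l; auto. Qed.

Lemma gm_diff m p x : (m <= p)%nat -> Cminus (gm p x) (gm m x) =
  csum (filter (nin (Rr m)) (Rr p)) (fun z => Cmult (cc z) (Cpow z (zs x p))).
Proof. intros Hmp. unfold gm.
  rewrite (csum_perm (Rr p) (Rr m ++ filter (nin (Rr m)) (Rr p))).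
  rewrite csum_app. rewrite (csum_ext (Rr m) (fun z => Cmult (cc z) (Cpow z (zs x p))) (fun z => Cmult (cc z) (Cpow z (zs x m)))).
  ring.
  - intros z Hz. f_equal. apply root_zs. apply (root_up s z m p); auto. apply Rr_iff; auto. apply Rr_iff; auto.
  - apply NoDup_Permutation. apply roots_nodup. apply NoDup_app. apply roots_nodup. apply NoDup_filter, roots_nodup.
    intros a Ha Hf'. apply filter_In in Hf'. apply (proj1 (nin_spec _ _) (proj2 Hf')); auto.
    intros z. rewrite in_app_iff, filter_In, nin_spec. split.
    + intros Hz. destruct (classic (In z (Rr m))); auto.
    + intros [Hz|[Hz _]]; auto. apply (Rr_mono m); auto. Qed.

Lemma gm_cauchy eps : 0 < eps -> exists M, forall m p x, (M <= m)%nat -> (m <= p)%nat -> Cmod (Cminus (gm p x) (gm m x)) <= eps.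
Proof. intros He. destruct cc_bound as [K [A [HA Hcb]]].
  destruct (proj2 Hf K) as [B HB].
  destruct (tail (fun z => A * (Cmod (hf z) * lam z ^ K)) (A * B)) with (eps := eps) as [M HM]; auto.
  { intros l Nl Dl. rewrite rsum_scal. apply Rmult_le_compat_l. lra. unfold rsum, hf. apply HB; auto. }
  exists M. intros m p x HMm Hmp. rewrite gm_diff by auto.
  eapply Rle_trans. apply Cmod_csum. eapply Rle_trans; [|apply (HM (filter (nin (Rr m)) (Rr p)))].
  - apply rsum_le. intros z Hz. apply filter_In in Hz. destruct Hz as [Hz _].
    rewrite Cmod_mult, Cmod_pow1, Rmult_1_r. apply Hcb. apply (Rr_dual p); auto. apply Cmod_dual, (Rr_dual p); auto.
  - apply NoDup_filter, roots_nodup.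
  - intros z Hz. apply filter_In in Hz. destruct Hz as [Hz Hn]. split. apply (Rr_dual p); auto.
    intro HzM. apply nin_spec in Hn. apply Hn. apply (Rr_mono M); auto. Qed.

Definition g (x : ZS s) : C := (real (Lim_seq (fun p => Re (gm p x))), real (Lim_seq (fun p => Im (gm p x)))).

Lemma g_approx eps : 0 < eps -> exists M, forall m x, (M <= m)%nat -> Cmod (Cminus (g x) (gm m x)) <= eps.
Proof. intros He. destruct (gm_cauchy (eps/2)) as [M HM]. lra.
  exists M. intros m x Hm. eapply Rle_trans. apply Cmod_le_ReIm.
  assert (Hc : forall e, 0 < e -> exists M, forall m p, (M <= m)%nat -> (m <= p)%nat -> Cmod (Cminus (gm p x) (gm m x)) <= e).
  { intros e He'. destruct (gm_cauchy e He') as [M' HM']. exists M'. intros; auto. }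
  assert (R1 := lim_approx (fun p => Re (gm p x))).
  assert (R2 := lim_approx (fun p => Im (gm p x))).
  assert (A1 : Rabs (real (Lim_seq (fun p => Re (gm p x))) - Re (gm m x)) <= eps / 2).
  { apply (R1) with M; auto.
    - intros e He'. destruct (Hc e He') as [M' HM']. exists M'. intros a b Ha Hb.
      eapply Rle_trans; [|apply (HM' a b Ha Hb)]. eapply Rle_trans; [|apply re_le_Cmod]. right; f_equal; try (unfold Re, Im, Cminus, Cplus, Copp; simpl; ring).
    - intros a b Ha Hb. eapply Rle_trans; [|apply (HM a b x Ha Hb)]. eapply Rle_trans; [|apply re_le_Cmod]. right; f_equal; try (unfold Re, Im, Cminus, Cplus, Copp; simpl; ring). }
  assert (A2 : Rabs (real (Lim_seq (fun p => Im (gm p x))) - Im (gm m x)) <= eps / 2).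
  { apply (R2) with M; auto.
    - intros e He'. destruct (Hc e He') as [M' HM']. exists M'. intros a b Ha Hb.
      eapply Rle_trans; [|apply (HM' a b Ha Hb)]. eapply Rle_trans; [|apply im_le_Cmod]. right; f_equal; try (unfold Re, Im, Cminus, Cplus, Copp; simpl; ring).
    - intros a b Ha Hb. eapply Rle_trans; [|apply (HM a b x Ha Hb)]. eapply Rle_trans; [|apply im_le_Cmod]. right; f_equal; try (unfold Re, Im, Cminus, Cplus, Copp; simpl; ring). }
  replace (Re (Cminus (g x) (gm m x))) with (real (Lim_seq (fun p => Re (gm p x))) - Re (gm m x)) by (unfold g, Re, Im, Cminus, Cplus, Copp; simpl; ring).
  replace (Im (Cminus (g x) (gm m x))) with (real (Lim_seq (fun p => Im (gm p x))) - Im (gm m x)) by (unfold g, Re, Im, Cminus, Cplus, Copp; simpl; ring).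
  lra. Qed.

Lemma Zcont_gm m : Zcont s (gm m).
Proof. unfold gm. apply (Zcont_loc s m (fun k => csum (Rr m) (fun z => Cmult (cc z) (Cpow z k)))). Qed.

Lemma gm_loc m x y : zs y m = zs x m -> gm m y = gm m x.
Proof. intros E. unfold gm. rewrite E. reflexivity. Qed.

Lemma Cmod_minus_le a b : Cmod (Cminus a b) <= Cmod a + Cmod b.
Proof. unfold Cminus. eapply Rle_trans. apply Cmod_triangle. rewrite Cmod_opp. lra. Qed.

Lemma g_cont : Zcont s g.
Proof. intros x eps He. destruct (g_approx (eps/4)) as [M HM]. lra. exists M. intros y E.
  replace (Cminus (g y) (g x)) with (Cminus (Cminus (g y) (gm M y)) (Cminus (g x) (gm M x)))
    by (rewrite (gm_loc M x y E); ring).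
  eapply Rle_lt_trans. apply Cmod_minus_le. pose proof (HM M y (le_n _)). pose proof (HM M x (le_n _)). lra. Qed.

Lemma I_char u m : Cpow u (sc s m) = RtoC 1 -> u <> RtoC 1 -> I (fun y => Cpow u (zs y m)) = RtoC 0.
Proof. intros H Hne.
  pose proof (I_phi s I HI (fun y => Cpow u (zs y m)) (Zcont_loc s m (fun k => Cpow u k))) as E.
  rewrite (I_ext s I _ (fun y => Cmult u (Cpow u (zs y m)))) in E by (intros; apply pow_phi; auto).
  rewrite (I_scal s I HI) in E by (apply (Zcont_loc s m (fun k => Cpow u k))).
  set (J := I (fun y => Cpow u (zs y m))) in *.
  assert (Hne' : Cminus u (RtoC 1) <> RtoC 0). { intro E'. apply Hne. replace u with (Cplus (Cminus u (RtoC 1)) (RtoC 1)) by ring. rewrite E'; ring. }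
  replace J with (Cmult (Cinv (Cminus u (RtoC 1))) (Cminus (Cmult u J) J)) by (field; auto).
  rewrite E. ring. Qed.

Lemma I_char1 m : I (fun y => Cpow (RtoC 1) (zs y m)) = RtoC 1.
Proof. rewrite (I_ext s I _ (fun _ => RtoC 1)) by (intros; apply Cpow_1_l). apply (I_one s I HI). Qed.

Lemma hg w : in_dual s w -> fourier s I g w = cc w.
Proof. intros [m0 Hw]. apply small_eq. intros eps He.
  destruct (g_approx (eps/4)) as [M HM]; [lra|].
  set (m := Nat.max m0 M).
  assert (Hwm : Cpow w (sc s m) = RtoC 1) by (apply (root_up s w m0); [lia|auto]).
  assert (Hcw : Cpow (Cconj w) (sc s m) = RtoC 1) by (apply conj_root; auto).
  assert (Hmw : Cmod w = 1) by (apply (Cmod_root w (sc s m)); auto using sc_ge1).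
  assert (E1 : fourier s I g w = I (fun y => Cmult (g y) (Cpow (Cconj w) (zs y m)))).
  { unfold fourier; apply (I_ext s I); intros; rewrite (chi_eq s _ m); auto. }
  assert (E2 : I (fun y => Cmult (gm m y) (Cpow (Cconj w) (zs y m))) = cc w).
  { rewrite (I_ext s I _ (fun y => csum (Rr m) (fun z => Cmult (cc z) (Cpow (Cmult z (Cconj w)) (zs y m))))).
    rewrite (I_csum s I HI).
    rewrite (csum_single _ _ w).
    - rewrite (I_ext s I _ (fun _ => cc w)). apply (I_const s I HI).
      intros; rewrite conj_mul, Cpow_1_l by auto. ring.
    - apply roots_nodup.
    - apply Rr_iff; auto.
    - intros z Hz Hzw. rewrite (I_scal s I HI). rewrite I_char. ring.
      rewrite Cpow_mult_l, Hcw. rewrite (proj1 (Rr_iff m z) Hz). ring.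
      intro E. apply Hzw. rewrite <- (Cmult_1_r z), <- (conj_mul' w), Cmult_assoc, E by auto. ring.
      apply (Zcont_loc s m (fun k => Cpow (Cmult z (Cconj w)) k)).
    - intros z _. apply (Zcont_loc s m (fun k => Cmult (cc z) (Cpow (Cmult z (Cconj w)) k))).
    - intros y. unfold gm. rewrite Cmult_comm, <- csum_scal. apply csum_ext. intros z _.
      rewrite Cpow_mult_l. ring. }
  rewrite E1, <- E2, <- (I_minus s I HI).
  eapply Rle_trans. apply (I_bound s I HI _ (fun _ => RtoC 1) (eps/4)).
  - apply Zcont_minus. apply (Zcont_mult_loc s m g (fun k => Cpow (Cconj w) k)), g_cont.
    apply (Zcont_mult_loc s m (gm m) (fun k => Cpow (Cconj w) k)), Zcont_gm.
  - apply Zcont_const.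
  - intros; simpl; split; lra.
  - intros y. replace (Cminus (Cmult (g y) (Cpow (Cconj w) (zs y m))) (Cmult (gm m y) (Cpow (Cconj w) (zs y m))))
      with (Cmult (Cminus (g y) (gm m y)) (Cpow (Cconj w) (zs y m))) by ring.
    rewrite Cmod_mult, Cmod_pow1, Rmult_1_r. simpl. rewrite Rmult_1_r. apply HM. lia. rewrite Cmod_conj; auto.
  - rewrite (I_one s I HI). simpl. lra.
  - apply (Zcont_mult_loc s m g (fun k => Cpow (Cconj w) k)), g_cont.
  - apply (Zcont_mult_loc s m (gm m) (fun k => Cpow (Cconj w) k)), Zcont_gm. Qed.

Definition Sm m (x : ZS s) := csum (Rr m) (fun z => Cmult (hf z) (Cpow z (zs x m))).
Definition U m (x y : ZS s) := csum (Rr m) (fun z => Cmult (Cpow z (zs x m)) (Cpow (Cconj z) (zs y m))).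

Lemma Zcont_U m x : Zcont s (U m x).
Proof. unfold U. apply (Zcont_loc s m (fun k => csum (Rr m) (fun z => Cmult (Cpow z (zs x m)) (Cpow (Cconj z) k)))). Qed.
Lemma Zcont_hU m x h : Zcont s h -> Zcont s (fun y => Cmult (h y) (U m x y)).
Proof. intros H. unfold U. apply (Zcont_mult_loc s m h (fun k => csum (Rr m) (fun z => Cmult (Cpow z (zs x m)) (Cpow (Cconj z) k)))); auto. Qed.

Lemma U_val m x y : U m x y = if Nat.eq_dec (zs x m) (zs y m) then RtoC (INR (sc s m)) else RtoC 0.
Proof. unfold U, Rr, roots. rewrite csum_map.
  set (a := zs x m). set (b := zs y m). set (n := sc s m).
  assert (Ha : (a < n)%nat) by apply zs_lt. assert (Hb : (b < n)%nat) by apply zs_lt.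
  assert (Hn : (1 <= n)%nat) by apply sc_ge1.
  rewrite (csum_ext _ _ (fun j => Cpow (Cmult (Cpow (om n) a) (Cconj (Cpow (om n) b))) j)).
  2:{ intros j _. rewrite Cpow_mult_l, Cpow_conj, Cpow_conj, <- !Cpow_mult_r, (Nat.mul_comm j a), (Nat.mul_comm j b). reflexivity. }
  assert (Hmo : forall k, Cmod (Cpow (om n) k) = 1) by (intros; apply Cmod_pow1, Cmod_om).
  destruct Nat.eq_dec as [e|ne].
  - rewrite e, conj_mul by auto. rewrite (csum_ext _ _ (fun _ => RtoC 1)) by (intros; apply Cpow_1_l).
    rewrite csum_const, length_seq. ring.
  - apply csum_geom0.
    + rewrite Cpow_mult_l, <- Cpow_conj, <- !Cpow_mult_r, (Nat.mul_comm a n), (Nat.mul_comm b n), !Cpow_mult_r, om_pow_n, !Cpow_1_l by auto.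
      apply injective_projections; simpl; ring.
    + intro E. apply ne. apply (om_inj n); auto.
      rewrite <- (Cmult_1_r (Cpow (om n) a)), <- (conj_mul' (Cpow (om n) b)), Cmult_assoc, E by auto. ring. Qed.

Lemma I_U m x : I (U m x) = RtoC 1.
Proof. unfold U. rewrite (I_csum s I HI).
  - rewrite (csum_single _ _ (RtoC 1)).
    + rewrite (I_scal s I HI), Cconj_1, I_char1, Cpow_1_l. ring. apply (Zcont_loc s m (fun k => Cpow (Cconj (RtoC 1)) k)).
    + apply roots_nodup.
    + apply roots_1, sc_ge1.
    + intros z Hz Hz1. rewrite (I_scal s I HI), I_char. ring.
      apply conj_root, Rr_iff; auto.
      intro E. apply Hz1. rewrite <- (Cconj_conj z), E. apply Cconj_1.
      apply (Zcont_loc s m (fun k => Cpow (Cconj z) k)).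
  - intros z _. apply (Zcont_loc s m (fun k => Cmult (Cpow z (zs x m)) (Cpow (Cconj z) k))). Qed.

Lemma Sm_I m x : Sm m x = I (fun y => Cmult (f y) (U m x y)).
Proof. unfold Sm.
  rewrite (csum_ext _ _ (fun z => I (fun y => Cmult (Cpow z (zs x m)) (Cmult (f y) (Cpow (Cconj z) (zs y m)))))).
  2:{ intros z Hz. rewrite (hf_root m) by auto. rewrite (I_scal s I HI). ring.
      apply (Zcont_mult_loc s m f (fun k => Cpow (Cconj z) k)), (proj1 Hf). }
  rewrite <- (I_csum s I HI). apply (I_ext s I). intros y. unfold U. rewrite <- csum_scal. apply csum_ext. intros; ring.
  intros z _. apply Zcont_scal. apply (Zcont_mult_loc s m f (fun k => Cpow (Cconj z) k)), (proj1 Hf). Qed.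

Lemma inversion x eps : 0 < eps -> exists M0, forall m, (M0 <= m)%nat -> Cmod (Cminus (Sm m x) (f x)) <= eps.
Proof. intros He. destruct (proj1 Hf x (eps/2)) as [m0 Hm0]. lra. exists m0. intros m Hm.
  rewrite Sm_I.
  replace (f x) with (I (fun y => Cmult (f x) (U m x y))).
  2:{ rewrite (I_scal s I HI), I_U. ring. apply Zcont_U. }
  rewrite <- (I_minus s I HI).
  apply Rle_trans with (2 * (eps/2) * Re (I (U m x))).
  apply (I_bound s I HI).
  - apply Zcont_minus. apply Zcont_hU, (proj1 Hf). apply Zcont_scal, Zcont_U.
  - apply Zcont_U.
  - intros y. rewrite U_val. destruct Nat.eq_dec; simpl; split; try lra. apply pos_INR.
  - intros y. rewrite U_val. destruct Nat.eq_dec as [e|ne].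
    + replace (Cminus (Cmult (f y) (RtoC (INR (sc s m)))) (Cmult (f x) (RtoC (INR (sc s m)))))
        with (Cmult (Cminus (f y) (f x)) (RtoC (INR (sc s m)))) by ring.
      rewrite Cmod_mult, Cmod_R, Rabs_pos_eq by apply pos_INR. simpl.
      apply Rmult_le_compat_r. apply pos_INR. left. apply Hm0. apply (zs_eq_down s x y m0 m); auto.
    + replace (Cminus (Cmult (f y) (RtoC 0)) (Cmult (f x) (RtoC 0))) with (RtoC 0) by ring.
      rewrite Cmod_0. simpl. lra.
  - rewrite I_U. simpl. lra.
  - apply Zcont_hU, (proj1 Hf).
  - apply Zcont_scal, Zcont_U. Qed.

Lemma gm_phi m x : Cminus (gm m (phi s x)) (gm m x) = Sm m x.
Proof. unfold gm, Sm.
  rewrite (csum_ext (Rr m) (fun z => Cmult (cc z) (Cpow z (zs (phi s x) m))) (fun z => Cmult (cc z) (Cmult z (Cpow z (zs x m))))).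
  2:{ intros z Hz. rewrite pow_phi; auto. apply Rr_iff; auto. }
  rewrite csum_minus. apply csum_ext. intros z _.
  rewrite <- cc_mul. ring. Qed.

Lemma g_eq x : f x = Cminus (g (phi s x)) (g x).
Proof. symmetry. apply small_eq. intros eps He.
  destruct (g_approx (eps/3)) as [M1 H1]. lra. destruct (inversion x (eps/3)) as [M2 H2]. lra.
  set (m := Nat.max M1 M2).
  replace (Cminus (Cminus (g (phi s x)) (g x)) (f x)) with
    (Cplus (Cminus (Cminus (g (phi s x)) (gm m (phi s x))) (Cminus (g x) (gm m x))) (Cminus (Sm m x) (f x)))
    by (rewrite <- gm_phi; ring).
  eapply Rle_trans. apply Cmod_triangle. eapply Rle_trans. apply Rplus_le_compat_r. apply Cmod_minus_le.
  pose proof (H1 m (phi s x) ltac:(lia)). pose proof (H1 m x ltac:(lia)). pose proof (H2 m ltac:(lia)). lra. Qed.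

Lemma g_RD : C_RD s I lam g.
Proof. split. apply g_cont. intros N. destruct cc_bound as [K [A [HA Hb]]].
  destruct (proj2 Hf (K + N)%nat) as [B HB]. exists (A * B). intros l Nl Dl.
  apply Rle_trans with (rsum l (fun z => A * (Cmod (hf z) * lam z ^ (K + N)))).
  - apply rsum_le. intros z Hz. rewrite hg by auto. rewrite pow_add.
    pose proof (lam_ge1 z (Dl z Hz)). assert (0 <= lam z ^ N) by (apply pow_le; lra).
    apply Rle_trans with (A * (Cmod (hf z) * lam z ^ K) * lam z ^ N).
    apply Rmult_le_compat_r; auto. right; ring.
  - rewrite rsum_scal. apply Rmult_le_compat_l. lra. unfold rsum, hf. apply HB; auto. Qed.

End Main.

Theorem mainTheorem9 (s : scale) (lam : C -> R) (I : (ZS s -> C) -> C)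
  (Hlam : is_na_length s lam) (Hgrow : grows_fast s lam)
  (HI : is_haar_integral s I) (f : ZS s -> C) (Hf : C_RD s I lam f) :
  I f = RtoC 0 <->
  exists g : ZS s -> C, C_RD s I lam g /\
    forall x : ZS s, f x = Cminus (g (phi s x)) (g x).
Proof. split.
  - intros Hf0. exists (g s I f). split. eapply g_RD; eauto. intros x. eapply g_eq; eauto.
  - intros [g0 [[Hg0 _] E]]. rewrite (I_ext s I f (fun x => Cminus (g0 (phi s x)) (g0 x))) by auto.
    rewrite (I_minus s I HI) by (auto using Zcont_phi). rewrite (I_phi s I HI) by auto. ring. Qed.
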